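(* For every integer $n\ge1$ there is an rpoNFA $\mathcal{A}_n$ over an $n$-letter alphabet with $n(n+2)$ states such that the shortest word not accepted by $\mathcal{A}_n$ has length $\binom{2n}{n}-1$. Consequently, every DFA accepting $L(\mathcal{A}_n)$ has at least $\binom{2n}{n}$ states.
   Context: A poNFA is an NFA whose reachability relation ($p\le q$ iff $q\in p\cdot w$ for some word $w$) is a partial order; an rpoNFA is a poNFA such that for every state $q$ and letter $a$, $q\in q\cdot a$ implies $q\cdot a=\{q\}$. *)

(* Defs.v *)
From mathcomp Require Import all_boot.
Set Implicit Arguments. Unset Strict Implicit. Unset Printing Implicit Defensive.

Record nfa (n : nat) := NFA {
  nstate : finType;
  ntrans : nstate -> 'I_n -> {set nstate};
  ninit  : {set nstate};
  nfinal : {set nstate} }.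

Fixpoint nreach n (A : nfa n) (X : {set nstate A}) (w : seq 'I_n) : {set nstate A} :=
  match w with
  | [::] => X
  | a :: w' => nreach (\bigcup_(q in X) ntrans q a) w'
  end.

Definition nstep n (A : nfa n) (q : nstate A) (w : seq 'I_n) := nreach [set q] w.

Definition naccepts n (A : nfa n) (w : seq 'I_n) : bool :=
  nreach (ninit A) w :&: nfinal A != set0.

Definition nreachable n (A : nfa n) (p q : nstate A) : Prop :=
  exists w : seq 'I_n, q \in nstep p w.

(* poNFA: the reachability relation is a partial order (it is always
   reflexive and transitive; so this is antisymmetry) *)
Definition poNFA n (A : nfa n) : Prop :=
  forall p q : nstate A, nreachable p q -> nreachable q p -> p = q.

Definition rpoNFA n (A : nfa n) : Prop :=
  poNFA A /\ forall (q : nstate A) (a : 'I_n), q \in ntrans q a -> ntrans q a = [set q].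

Record dfa (n : nat) := DFA {
  dstate : finType;
  dtrans : dstate -> 'I_n -> dstate;
  dinit  : dstate;
  dfinal : {set dstate} }.

Definition daccepts n (D : dfa n) (w : seq 'I_n) : bool :=
  foldl (@dtrans n D) (dinit D) w \in dfinal D.

(* Main.v *)
Require Import Defs.
From mathcomp Require Import all_boot.
From mathcomp Require Import zify.
Set Implicit Arguments. Unset Strict Implicit. Unset Printing Implicit Defensive.

Definition St (n : nat) : finType := ('I_n * 'I_(n+2))%type.

Definition topo n : 'I_(n+2) := @Ordinal (n+2) n.+1 (eq_ind_r (fun k => n.+1 < k) (ltnSn n.+1) (addn2 n)).

Definition ordv n (v : nat) : 'I_(n+2) := insubd (topo n) v.

Lemma val_ordv n v : v < n + 2 -> nat_of_ord (ordv n v) = v.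
Proof. by move=> H; rewrite /ordv val_insubd H. Qed.

Definition tr n (q : St n) (a : 'I_n) : {set St n} :=
  let l := nat_of_ord q.1 in let s := nat_of_ord q.2 in
  if s == n.+1 then [set q]
  else if a < l then [set q]
  else if nat_of_ord a == l then
    (if s < n then [set q' : St n | (nat_of_ord q'.1 <= l) && (nat_of_ord q'.2 == s.+1)]
     else [set (q.1, topo n)])
  else if nat_of_ord a == l.+1 then
    (if s < n then [set (q.1, topo n)] else set0)
  else set0.

Definition Anfa n : nfa n :=
  @NFA n (St n) (@tr n) [set q : St n | nat_of_ord q.2 == 0]
    [set q : St n | (nat_of_ord q.2 == n.+1) || ((nat_of_ord q.1 == n.-1) && (nat_of_ord q.2 < n))].

Definition Rq n (q q' : St n) := (q' == q) || (nat_of_ord q.2 < nat_of_ord q'.2).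

Lemma tr_mono n (q q' : St n) a : q' \in tr q a -> Rq q q'.
Proof.
rewrite /tr /Rq.
case: ifP => H0; first by rewrite inE => ->.
case: ifP => _; first by rewrite inE => ->.
case: ifP => _.
  case: ifP => _; first by rewrite inE => /andP[_ /eqP ->]; rewrite ltnSn orbT.
  rewrite inE => /eqP -> /=. move: H0. case: q => l s /=. have := ltn_ord s. rewrite [in X in _ < X]addn2 ltnS leq_eqVlt => /orP[/eqP->|->]; by rewrite ?eqxx ?orbT.
case: ifP => _; last by rewrite inE.
case: ifP => Hs; last by rewrite inE.
rewrite inE => /eqP -> /=. by rewrite (ltn_trans Hs) ?orbT.
Qed.

Lemma Rq_trans n (p q r : St n) : Rq p q -> Rq q r -> Rq p r.
Proof.
rewrite /Rq => /orP[/eqP ->|H1] //. case/orP=> [/eqP ->|H2]; first by rewrite H1 orbT.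
by rewrite (ltn_trans H1 H2) orbT.
Qed.

Lemma reach_mono n (X : {set St n}) w q' : q' \in nreach (A:=Anfa n) X w ->
  exists2 q, q \in X & Rq q q'.
Proof.
elim: w X => [|a w IH] X /=; first by exists q' => //; rewrite /Rq eqxx.
move/IH=> [q1 /bigcupP[q Hq Hq1] H]. exists q => //. exact: Rq_trans (tr_mono Hq1) H.
Qed.

Lemma A_rpo n : rpoNFA (Anfa n).
Proof.
split.
  move=> p q [w1 H1] [w2 H2].
  have [p' ] := reach_mono H1. rewrite inE => /eqP -> {p'} Hpq.
  have [q' ] := reach_mono H2. rewrite inE => /eqP -> {q'} Hqp.
  move: Hpq Hqp; rewrite /Rq => /orP[/eqP->//|H] /orP[/eqP->//|H'].
  by have := ltn_trans H H'; rewrite ltnn.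
move=> q a /=. rewrite /tr.
case: ifP => _ //. case: ifP => _ //.
case: ifP => _.
  case: ifP => Hs; first by rewrite inE => /andP[_]; rewrite eqn_leq ltnn andbF.
  by rewrite inE => /eqP {1}<-.
case: ifP => _; last by rewrite inE.
case: ifP => Hs; last by rewrite inE.
by rewrite inE => /eqP {1}<-.
Qed.

Definition Sc n (c : 'I_n -> nat) : {set St n} := [set q : St n | nat_of_ord q.2 == c q.1].
Definition validc n (c : 'I_n -> nat) := (forall l, c l <= n) /\ (forall i j : 'I_n, i <= j -> c j <= c i).
Definition okb n (c : 'I_n -> nat) (a : 'I_n) := (c a < n) && [forall l : 'I_n, (l.+1 == a) ==> (c l == n)].
Definition upd n (c : 'I_n -> nat) (a : 'I_n) := fun l : 'I_n => if l <= a then (c a).+1 else c l.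

Fixpoint run n (c : 'I_n -> nat) (w : seq 'I_n) : option ('I_n -> nat) :=
  match w with [::] => Some c | a :: w' => if okb c a then run (upd c a) w' else None end.

Lemma one_step n (c : 'I_n -> nat) a : validc c -> okb c a ->
  \bigcup_(q in Sc c) tr q a = Sc (upd c a).
Proof.
move=> [Hb Hm] /andP[Ha /forallP Hl].
apply/setP => q'. rewrite [RHS]inE. apply/bigcupP/idP.
  move=> [q]. rewrite inE => /eqP Hq. rewrite /tr Hq.
  have Hn : (c q.1 == n.+1) = false by apply/negbTE; rewrite neq_ltn ltnS Hb.
  rewrite Hn /upd.
  case: ifP => H1.
    rewrite inE => /eqP ->. by rewrite leqNgt H1 /= Hq.
  case: ifP => H2.
    move/eqP: H2 => H2. have Ea : a = q.1 by apply: val_inj.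
    rewrite -Ea Ha inE => /andP[-> /eqP ->] //.
  case: ifP => H3; last by rewrite inE.
  have := Hl q.1. rewrite (eqP H3) eqxx /= => /eqP ->. by rewrite ltnn inE.
move=> Hq'. rewrite /upd in Hq'. case: (leqP q'.1 a) => H; [rewrite H in Hq' | rewrite leqNgt H /= in Hq'].
  exists (a, ordv n (c a)).
    rewrite inE /= val_ordv //. rewrite addn2. by apply: leq_trans (Hb a) _.
  rewrite /tr /= val_ordv; last by rewrite addn2; apply: leq_trans (Hb a) _.
  have Hn : (c a == n.+1) = false by apply/negbTE; rewrite neq_ltn ltnS Hb.
  by rewrite Hn ltnn eqxx Ha inE H.
exists q'; first by rewrite inE.
rewrite /tr (eqP Hq').
have Hn : (c q'.1 == n.+1) = false by apply/negbTE; rewrite neq_ltn ltnS Hb.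
by rewrite Hn H inE.
Qed.

Definition topq n (q : St n) := nat_of_ord q.2 == n.+1.

Lemma lt2 n v : v <= n -> v < n + 2.
Proof. by move=> H; rewrite addn2 ltnS (leq_trans H). Qed.

Lemma bad_step n (c : 'I_n -> nat) a : validc c -> ~~ okb c a ->
  exists2 q, q \in \bigcup_(q in Sc c) tr q a & topq q.
Proof.
move=> [Hb Hm]. rewrite negb_and => /orP[H|/forallPn[l]].
  have Ec : c a = n by apply/eqP; rewrite eqn_leq Hb leqNgt H.
  exists (a, topo n); last by rewrite /topq. apply/bigcupP. exists (a, ordv n n).
    by rewrite inE /= val_ordv ?Ec // addn2.
  rewrite /tr /= val_ordv; last by rewrite addn2.
  by rewrite (ltn_eqF (ltnSn n)) !ltnn eqxx inE.
rewrite negb_imply => /andP[/eqP Hla Hcl].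
have Hlt : c l < n by rewrite ltn_neqAle Hcl Hb.
exists (l, topo n); last by rewrite /topq. apply/bigcupP. exists (l, ordv n (c l)).
  by rewrite inE /= val_ordv // lt2 // ltnW.
rewrite /tr /= val_ordv; last by rewrite lt2 // ltnW.
rewrite ltn_eqF; last by rewrite ltnS ltnW.
by rewrite -Hla ltnNge leqnSn /= gtn_eqF // eqxx Hlt inE.
Qed.

Lemma top_keep n (X : {set St n}) q w : q \in X -> topq q -> q \in nreach (A:=Anfa n) X w.
Proof.
elim: w X => [|a w IH] X //= Hq Ht. apply: IH => //.
apply/bigcupP; exists q => //. rewrite /= /tr; rewrite /topq in Ht; by rewrite Ht inE.
Qed.

Lemma upd_valid n (c : 'I_n -> nat) a : validc c -> okb c a -> validc (upd c a).
Proof.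
move=> [Hb Hm] /andP[Ha _]. split.
  by move=> l; rewrite /upd; case: ifP.
move=> i j Hij. rewrite /upd. case: (leqP j a) => Hj.
  by rewrite (leq_trans Hij Hj).
case: (leqP i a) => Hi; last exact: Hm.
apply: leq_trans (Hm _ _ (ltnW Hj)) _. exact: leqnSn.
Qed.

Lemma run_reach n (c : 'I_n -> nat) w : validc c ->
  (forall c', run c w = Some c' -> validc c' /\ nreach (A:=Anfa n) (Sc c) w = Sc c') /\
  (run c w = None -> exists2 q, q \in nreach (A:=Anfa n) (Sc c) w & topq q).
Proof.
elim: w c => [|a w IH] c Hv /=; first by split=> // c' [<-].
case: ifP => Hok.
  have [IH1 IH2] := IH _ (upd_valid Hv Hok). by rewrite one_step.
split=> // _. have [q Hq Ht] := bad_step Hv (negbT Hok).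
exists q => //. exact: top_keep.
Qed.

Definition Phi n (c : 'I_n -> nat) := \sum_(j < n) 'C(n - c j + j, j.+1).

Lemma hs h j : 'C(h + j, j) = 1 + \sum_(i < j) 'C(h + i, i.+1).
Proof.
elim: j => [|j IH]; first by rewrite addn0 bin0 big_ord0.
rewrite big_ord_recr /= addnS binS IH addnCA; congr (1 + _); apply: addnC.
Qed.

Lemma low_full n (c : 'I_n -> nat) a : validc c -> okb c a ->
  forall l : 'I_n, l < a -> c l = n.
Proof.
move=> [Hb Hm] /andP[_ /forallP Hl] l Hla.
have Hp : a.-1 < n by apply: leq_ltn_trans (leq_pred a) (ltn_ord a).
have := Hl (Ordinal Hp). rewrite /= prednK; last by apply: leq_ltn_trans Hla.
rewrite eqxx /= => /eqP Hc.
apply/eqP; rewrite eqn_leq Hb -{1}Hc. apply: Hm => /=.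
by rewrite -ltnS prednK // (leq_ltn_trans _ Hla).
Qed.

Lemma phi_step n (c : 'I_n -> nat) a : validc c -> okb c a ->
  Phi c = (Phi (upd c a)).+1.
Proof.
move=> Hv Hok. have Hlow := low_full Hv Hok.
move: (Hok) => /andP[Ha _].
set h := n - (c a).+1.
have Hh : n - c a = h.+1 by rewrite /h subnS prednK // subn_gt0.
rewrite /Phi (bigID (fun j : 'I_n => j < a)) [in RHS](bigID (fun j : 'I_n => j < a)).
rewrite big1; last first.
  by move=> j Hj; rewrite Hlow // subnn add0n bin_small.
have -> : \sum_(i < n | i < a) 'C(n - upd c a i + i, i.+1) = \sum_(i < a) 'C(h + i, i.+1).
  rewrite (big_ord_widen _ (fun i => 'C(h + i, i.+1)) (ltnW (ltn_ord a))).
  apply: eq_bigr => i Hi. by rewrite /upd ltnW.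
rewrite (bigD1 a) ?ltnn // [in RHS](bigD1 a) ?ltnn //.
rewrite /upd leqnn -/h Hh.
have -> : \sum_(i < n | ~~ (i < a) && (i != a)) 'C(n - (if i <= a then (c a).+1 else c i) + i, i.+1)
   = \sum_(i < n | ~~ (i < a) && (i != a)) 'C(n - c i + i, i.+1).
  apply: eq_bigr => i /andP[Hi Hia].
  have -> : (i <= a) = false. by rewrite leq_eqVlt (negbTE Hi) orbF; apply/negbTE.
  done.
have E : 'C((h + a).+1, a.+1) = ('C(h + a, a.+1) + \sum_(i < a) 'C(h + i, i.+1)).+1.
  by rewrite binS hs addnCA add1n.
have Ea : h.+1 + a = (h + a).+1 := addSn h a.
rewrite Ea E /=.
set S1 := \sum_(i < a) _. set S2 := \sum_(i < n | _) _. set C1 := 'C(_, _). lia.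
Qed.

Lemma run_len n (c c' : 'I_n -> nat) w : validc c -> run c w = Some c' ->
  Phi c = Phi c' + size w.
Proof.
elim: w c => [|a w IH] c Hv /=; first by case=> ->; rewrite addn0.
case: ifP => // Hok Hr. rewrite (phi_step Hv Hok) (IH _ (upd_valid Hv Hok) Hr). lia.
Qed.

Lemma phi0 n : Phi (fun _ : 'I_n => 0) = 'C(n.*2, n) - 1.
Proof.
have := hs n n. rewrite addnn /Phi => ->.
rewrite add1n subn1 /=; apply: eq_bigr => j _; by rewrite subn0.
Qed.

Lemma phi_full n (c : 'I_n -> nat) : (forall l, c l = n) -> Phi c = 0.
Proof.
move=> H. rewrite /Phi big1 // => j _. by rewrite H subnn add0n bin_small.
Qed.

Lemma phi_zero n (c : 'I_n -> nat) : validc c -> Phi c = 0 -> forall l, c l = n.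
Proof.
move=> [Hb _] /eqP. rewrite /Phi sum_nat_eq0 => /forallP H l.
move/eqP: (H l) => /= H0.
have : ~~ (l.+1 <= n - c l + l) by rewrite -bin_gt0 H0.
rewrite -ltnNge => Hx. have := Hb l. lia.
Qed.

Lemma exists_run n k (c : 'I_n -> nat) : validc c -> Phi c = k ->
  exists w, size w = k /\ exists2 c', run c w = Some c' & forall l, c' l = n.
Proof.
elim: k c => [|k IH] c Hv Hk.
  exists [::]; split => //; exists c => //. exact: phi_zero.
case: (pickP (fun l : 'I_n => c l < n)) => [l Hl|H]; last first.
  move: Hk. rewrite phi_full // => l. apply/eqP; rewrite eqn_leq Hv.1 leqNgt /=. by rewrite H.
case: (@arg_minnP _ l (fun i : 'I_n => c i < n) (fun i : 'I_n => nat_of_ord i) Hl) => a Ha Hmin.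
have Hok : okb c a.
  rewrite /okb Ha /=. apply/forallP => l'. apply/implyP => /eqP Hl'.
  rewrite eqn_leq Hv.1 /= leqNgt. apply/negP => H. have := Hmin _ H. by rewrite -Hl' ltnn.
have Hk' : Phi (upd c a) = k by move: Hk; rewrite (phi_step Hv Hok); case.
have [w [Hs [c' Hr Hc']]] := IH (upd c a) (upd_valid Hv Hok) Hk'.
exists (a :: w); split; first by rewrite /= Hs.
by exists c' => //=; rewrite Hok.
Qed.

Lemma predlt n : 0 < n -> n.-1 < n.
Proof. by move=> H; rewrite ltn_predL. Qed.

Lemma accept_cfg n (c : 'I_n -> nat) (Hn : 0 < n) : validc c ->
  (Sc c :&: nfinal (Anfa n) != set0) = (c (Ordinal (predlt Hn)) < n).
Proof.
move=> [Hb Hm]. apply/set0Pn/idP.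
  move=> [q]. rewrite !inE => /andP[/eqP Hq /orP[Ht|/andP[Hl Hs]]].
    move: Ht; rewrite Hq => /eqP E. by have := Hb q.1; rewrite E ltnn.
  have -> : Ordinal (predlt Hn) = q.1 by apply: val_inj; rewrite /= (eqP Hl).
  by rewrite -Hq.
move=> H. exists (Ordinal (predlt Hn), ordv n (c (Ordinal (predlt Hn)))).
rewrite !inE /= val_ordv ?lt2 // eqxx /= H.
by rewrite eqxx orbT.
Qed.

Lemma dfa_bound n (A : nfa n) (D : dfa n) m (w : seq 'I_n) :
  (forall w, daccepts D w = naccepts A w) -> ~~ naccepts A w -> size w = m ->
  (forall w', size w' < m -> naccepts A w') -> m.+1 <= #|dstate D|.
Proof.
move=> HD Hw Hs Hshort.
pose f (i : 'I_m.+1) := foldl (@dtrans n D) (dinit D) (take i w).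
have key : forall i j : 'I_m.+1, i < j -> f i != f j.
  move=> i j Hij. apply/negP => /eqP E.
  pose w' := take i w ++ drop j w.
  have Hw' : naccepts A w' = naccepts A w.
    rewrite -!HD /daccepts /w' foldl_cat -/(f i) E /f -foldl_cat cat_take_drop //.
  have : size w' < m.
    rewrite /w' size_cat size_take size_drop Hs.
    have Hj := ltn_ord j. have Hi : i < m by apply: leq_trans Hij _; rewrite -ltnS.
    rewrite Hi. lia.
  move/Hshort. by rewrite Hw' (negbTE Hw).
have inj : injective f.
  move=> i j E. case: (ltngtP i j) => H.
  - by move: (key _ _ H); rewrite E eqxx.
  - by move: (key _ _ H); rewrite E eqxx.
  - exact: val_inj.
by have := @leq_card _ _ f inj; rewrite card_ord.
Qed.

Theorem mainTheorem15 :
  forall n : nat, 1 <= n ->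
  exists A : nfa n,
    [/\ rpoNFA A,
        #|nstate A| = n * (n + 2),
        (exists w : seq 'I_n, ~~ naccepts A w /\ size w = 'C(n.*2, n) - 1),
        (forall w : seq 'I_n, size w < 'C(n.*2, n) - 1 -> naccepts A w)
      & (forall D : dfa n, (forall w, daccepts D w = naccepts A w) ->
           'C(n.*2, n) <= #|dstate D|)].
Proof.
move=> n Hn.
pose c0 := fun _ : 'I_n => 0.
have Hv0 : validc c0 by split.
have Hinit : ninit (Anfa n) = Sc c0 by apply/setP => q; rewrite !inE.
have rej : forall w, ~~ naccepts (Anfa n) w -> size w = 'C(n.*2, n) - 1.
  move=> w. rewrite /naccepts Hinit.
  have [H1 H2] := run_reach w Hv0.
  case E: (run c0 w) => [c'|].
    have [Hv' ->] := H1 _ E. rewrite accept_cfg // -leqNgt => Hc.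
    have Hall : forall l, c' l = n.
      move=> l. apply/eqP; rewrite eqn_leq Hv'.1 (leq_trans Hc) //.
      apply: Hv'.2 => /=. by rewrite -ltnS prednK.
    have := run_len Hv0 E. by rewrite phi0 phi_full // add0n => ->.
  have [q Hq Ht] := H2 E. move/negP; case. apply/set0Pn; exists q.
  rewrite /topq in Ht. by rewrite !inE Hq /= Ht.
have short : forall w : seq 'I_n, size w < 'C(n.*2, n) - 1 -> naccepts (Anfa n) w.
  move=> w Hw. case Ha: (naccepts _ w) => //. move/negbT: Ha => /rej E. by rewrite E ltnn in Hw.
have [w [Hs [c' Hr Hc']]] := exists_run Hv0 (phi0 n).
have Hnr : ~~ naccepts (Anfa n) w.
  have [H1 _] := run_reach w Hv0.
  have [Hv' E] := H1 _ Hr.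
  by rewrite /naccepts Hinit E accept_cfg // Hc' ltnn.
exists (Anfa n). split.
- exact: A_rpo.
- by rewrite /= card_prod !card_ord.
- by exists w.
- exact: short.
- move=> D HD. have := dfa_bound HD Hnr Hs short.
  by rewrite subn1 prednK // bin_gt0 -addnn leq_addr.
Qed.
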